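(* Let $E$ be a closed set in $\mathbb{C}$. (1) $E$ satisfies condition $(U)_{1,\alpha}$ for some $\alpha>1$ if and only if there exist positive constants $A,C,r_0,\gamma$ and an increasing function $g_{1,\gamma}:(0,+\infty)\to(0,+\infty)$ with $g_{1,\gamma}(t)=\left(\log\frac{1}{Ct}\right)^{-\gamma}$ for $t\in(0,2r_0)$, such that $$\Lambda_{g_{1,\gamma}}\big(E\cap\overline{B}(a,r)\big)\ge A\,g_{1,\gamma}(2r)\quad\text{for every }a\in E,\ r\in(0,r_0).$$ (2) $E$ satisfies condition $(U)_{2,\beta}$ for some $\beta>0$ if and only if there exist positive constants $A,r_0,\eta$ and an increasing function $g_{2,\eta}:(0,+\infty)\to(0,+\infty)$ with $g_{2,\eta}(t)=\exp\!\left(-\eta\,\dfrac{\log(2/t)}{\log\log(4/t)}\right)$ for $t\in(0,2r_0)$, such that $$\Lambda_{g_{2,\eta}}\big(E\cap\overline{B}(a,r)\big)\ge A\,g_{2,\eta}(2r)\quad\text{for every }a\in E,\ r\in(0,r_0).$$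
   Context: For an increasing function $g:(0,\infty)\to(0,\infty)$ with $\lim_{t\to0}g(t)=0$ and a set $F\subset\mathbb{C}$, the $g$-Hausdorff content is $\Lambda_g(F)=\inf\{\sum_k g(\operatorname{diam}B_k)\}$, the infimum over all countable coverings $\{B_k\}$ of $F$ by closed discs. $\overline{B}(a,r)$ is the closed disc of center $a$ and radius $r$. For an increasing function $h$ on $[0,r_0)$ with $h(r)\le r$, a closed set $K\subset\mathbb{C}$ is $h$-uniformly perfect if $\{z\in\mathbb{C}: h(r)\le|z-a|\le r\}\cap K\neq\emptyset$ for every $a\in K$ and every $r\in(0,r_0)$. Let $h_{1,\alpha}(r)=r^\alpha$ ($\alpha>1$) and $h_{2,\beta}(r)=r(\log\frac1r)^{-\beta}$ ($\beta>0$). A closed set satisfies condition $(U)_{1,\alpha}$ (resp. $(U)_{2,\beta}$) if there exist constants $C>0$ and $r_0>0$ such that it is $Ch_{1,\alpha}$-uniformly perfect (resp. $Ch_{2,\beta}$-uniformly perfect) with that $r_0$. *)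

(* Defs.v *)
From Stdlib Require Import Reals.
From Coquelicot Require Import Coquelicot.
Open Scope R_scope.

Definition cdisc (a : C) (r : R) : C -> Prop := fun z => Cmod (z - a) <= r.

(* Only coverings with a finite sum
   contribute a real number to the set; the infimum is taken in Rbar
   (so it is +oo if every covering has divergent sum). *)
Definition covering_sums (g : R -> R) (F : C -> Prop) : R -> Prop :=
  fun x => exists (c : nat -> C) (rad : nat -> R),
    (forall k, 0 < rad k) /\
    (forall z, F z -> exists k, Cmod (z - c k) <= rad k) /\
    ex_series (fun k => g (2 * rad k)) /\
    x = Series (fun k => g (2 * rad k)).

Definition hausdorff_content (g : R -> R) (F : C -> Prop) : Rbar :=
  Glb_Rbar (covering_sums g F).

Definition uniformly_perfect (h : R -> R) (r0 : R) (K : C -> Prop) : Prop :=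
  closed K /\
  (forall r s, 0 <= r -> r <= s -> s < r0 -> h r <= h s) /\
  (forall r, 0 <= r < r0 -> h r <= r) /\
  (forall a, K a -> forall r, 0 < r < r0 ->
     exists z, K z /\ h r <= Cmod (z - a) <= r).

(* h_{1,alpha}(r) = r^alpha,  h_{2,beta}(r) = r (log 1/r)^(-beta); value 0 at r <= 0. *)
Definition h1 (alpha : R) (r : R) : R :=
  if Rle_dec r 0 then 0 else Rpower r alpha.
Definition h2 (beta : R) (r : R) : R :=
  if Rle_dec r 0 then 0 else r * Rpower (ln (1 / r)) (- beta).

Definition condU1 (alpha : R) (E : C -> Prop) : Prop :=
  exists Cc r0, 0 < Cc /\ 0 < r0 /\
    uniformly_perfect (fun r => Cc * h1 alpha r) r0 E.
Definition condU2 (beta : R) (E : C -> Prop) : Prop :=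
  exists Cc r0, 0 < Cc /\ 0 < r0 /\
    uniformly_perfect (fun r => Cc * h2 beta r) r0 E.

Definition gauge (g : R -> R) : Prop :=
  (forall t, 0 < t -> 0 < g t) /\
  (forall s t, 0 < s -> s <= t -> g s <= g t) /\
  filterlim g (at_right 0) (locally 0).

(* Main.v *)
Require Import Defs.
From Stdlib Require Import Reals.
From Coquelicot Require Import Coquelicot.
From Stdlib Require Import Lra Lia ClassicalEpsilon Classical.
Open Scope R_scope.

Lemma Cmod_tri3 (x y z : C) : Cmod (x - z)%C <= Cmod (x - y)%C + Cmod (y - z)%C.
Proof.
  replace (x - z)%C with ((x - y) + (y - z))%C.
  - apply Cmod_triangle.
  - destruct x, y, z; unfold Cminus, Cplus, Copp; simpl; f_equal; ring.
Qed.

Lemma Cmod_sym (x y : C) : Cmod (x - y)%C = Cmod (y - x)%C.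
Proof.
  replace (x - y)%C with (- (y - x))%C.
  - apply Cmod_opp.
  - destruct x, y; unfold Cminus, Cplus, Copp; simpl; f_equal; ring.
Qed.

Lemma Cmod_fst (x y : C) : Rabs (fst x - fst y) <= Cmod (x - y)%C.
Proof.
  pose proof (re_le_Cmod (x - y)%C) as H. destruct x, y; simpl in *. exact H.
Qed.

Lemma Cmod_snd (x y : C) : Rabs (snd x - snd y) <= Cmod (x - y)%C.
Proof.
  pose proof (Rmax_Cmod (x - y)%C) as H. destruct x, y; simpl in *.
  eapply Rle_trans; [|exact H]. apply Rmax_r.
Qed.

Lemma Cmod_le_comp (x y : C) :
  Cmod (x - y)%C <= 2 * (Rabs (fst x - fst y) + Rabs (snd x - snd y)).
Proof.
  pose proof (Cmod_2Rmax (x - y)%C) as H. destruct x, y; simpl in *.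
  eapply Rle_trans; [exact H|].
  assert (sqrt 2 <= 2).
  { rewrite <- (sqrt_square 2) at 2 by lra. apply sqrt_le_1_alt. lra. }
  pose proof (Rabs_pos (r - r1)). pose proof (Rabs_pos (r0 - r2)).
  assert (Rmax (Rabs (r + - r1)) (Rabs (r0 + - r2)) <= Rabs (r - r1) + Rabs (r0 - r2)).
  { unfold Rminus in *. apply Rmax_lub; lra. }
  pose proof (sqrt_pos 2).
  apply Rmult_le_compat; auto.
  - apply (Rle_trans _ (Rabs (r + - r1))); [apply Rabs_pos| apply Rmax_l].
Qed.

Lemma series_nonneg (u : nat -> R) : (forall k, 0 <= u k) -> ex_series u -> 0 <= Series u.
Proof.
  intros H He.
  assert (Series (fun _ => 0) <= Series u).
  { apply Series_le; auto. intros; split; [lra | apply H]. }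
  assert (Series (fun k => 0 * u k) = 0 * Series u) by apply Series_scal_l.
  rewrite (Series_ext (fun _ => 0) (fun k => 0 * u k)) in H0 by (intros; ring).
  lra.
Qed.

Lemma term_le_series (u : nat -> R) (j : nat) :
  (forall k, 0 <= u k) -> ex_series u -> u j <= Series u.
Proof.
  intros H He.
  rewrite (Series_incr_n u (S j)) by (lia || exact He).
  simpl Init.Nat.pred.
  assert (0 <= Series (fun k => u (S j + k)%nat)).
  { apply series_nonneg. intros; apply H.
    apply (ex_series_incr_n u (S j)); auto. }
  assert (u j <= sum_f_R0 u j).
  { destruct j; simpl; [lra|].
    assert (0 <= sum_f_R0 u j).
    { clear - H. induction j; simpl; [apply H|]. pose proof (H (S j)); lra. }
    lra. }
  lra.
Qed.

Lemma geom_small (A eps : R) : 0 < eps -> exists n : nat, A / 2 ^ n < eps.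
Proof.
  intros He.
  assert (H1 : Rabs (/ 2) < 1) by (rewrite Rabs_pos_eq; lra).
  assert (Hy : 0 < eps / (Rabs A + 1)).
  { apply Rdiv_lt_0_compat; auto. pose proof (Rabs_pos A); lra. }
  destruct (pow_lt_1_zero (/2) H1 _ Hy) as [N HN].
  exists N. specialize (HN N (le_n N)).
  rewrite Rabs_pos_eq in HN by (apply pow_le; lra).
  rewrite pow_inv in HN. unfold Rdiv.
  assert (0 < / 2 ^ N) by (apply Rinv_0_lt_compat, pow_lt; lra).
  assert (A * / 2 ^ N <= Rabs A * / 2 ^ N).
  { apply Rmult_le_compat_r; [lra| apply Rle_abs]. }
  assert (Rabs A * / 2 ^ N <= Rabs A * (eps / (Rabs A + 1))).
  { apply Rmult_le_compat_l; [apply Rabs_pos| lra]. }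
  assert (Rabs A * (eps / (Rabs A + 1)) < eps).
  { pose proof (Rabs_pos A).
    apply (Rmult_lt_reg_r (Rabs A + 1)); [lra|].
    unfold Rdiv. rewrite Rmult_assoc, Rmult_assoc, Rinv_l by lra. nra. }
  lra.
Qed.

Definition ind (c : nat -> C) (rad w : nat -> R) (b : C) (s : R) : nat -> R :=
  fun k => if Rle_dec (Cmod (b - c k)%C) (rad k + s) then w k else 0.

Lemma content_lb (E : C -> Prop) (HE : closed E) (g : R -> R)
  (gpos : forall t, 0 < t -> 0 < g t)
  (gmon : forall s t, 0 < s -> s <= t -> g s <= g t)
  (rs ts : nat -> R) (B : R)
  (Hrs : forall n, 0 < rs n) (Hts : forall n, 0 < ts n)
  (Hdec : forall n, rs (S n) <= rs n / 2)
  (Hsplit : forall n b, E b -> exists z, E z /\ 2 * rs (S n) + ts n <= Cmod (z - b)%C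
                                    /\ Cmod (z - b)%C + rs (S n) <= rs n)
  (HB : forall n, B / 2 ^ n <= g (ts n))
  (a : C) (Ha : E a) :
  Rbar_le (Finite B) (hausdorff_content g (fun z => E z /\ cdisc a (rs 0%nat) z)).
Proof.
  unfold hausdorff_content.
  destruct (Glb_Rbar_correct (covering_sums g (fun z => E z /\ cdisc a (rs 0%nat) z))) as [_ Hglb].
  apply Hglb.
  intros x [c [rad [Hrad [Hcov [Hex Hx]]]]]. subst x. simpl.
  set (w := fun k => g (2 * rad k)) in *.
  destruct (Rle_lt_dec B (Series w)) as [|Hlt]; auto. exfalso.
  assert (Hw : forall k, 0 < w k) by (intro k; apply gpos; pose proof (Hrad k); lra).
  assert (Hindnn : forall b s k, 0 <= ind c rad w b s k).
  { intros; unfold ind; destruct Rle_dec; [left; apply Hw| lra]. }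
  assert (Hindle : forall b s k, ind c rad w b s k <= w k).
  { intros; unfold ind; destruct Rle_dec; [lra| left; apply Hw]. }
  assert (Hexi : forall b s, ex_series (ind c rad w b s)).
  { intros. apply (@ex_series_le R_AbsRing R_CompleteNormedModule _ w); auto. intros k.
    change (Rabs (ind c rad w b s k) <= w k). rewrite Rabs_pos_eq; auto. }
  assert (Hrsdec : forall n, rs (S n) <= rs n) by (intro n; pose proof (Hdec n); pose proof (Hrs n); lra).
  set (P := fun n b => E b /\ Series (ind c rad w b (rs n)) < B / 2 ^ n).
  assert (Hstep : forall n b, P n b -> exists b', P (S n) b' /\ Cmod (b' - b)%C + rs (S n) <= rs n).
  { intros n b [Eb Hs].
    destruct (Hsplit n b Eb) as [z [Ez [Hz1 Hz2]]].
    assert (Hno : forall k, Cmod (b - c k)%C <= rad k + rs (S n) ->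
                       Cmod (z - c k)%C <= rad k + rs (S n) -> False).
    { intros k H1 H2.
      pose proof (Cmod_tri3 z (c k) b). rewrite (Cmod_sym (c k) b) in H.
      assert (ts n <= 2 * rad k) by lra.
      assert (g (ts n) <= w k) by (apply gmon; auto).
      assert (ind c rad w b (rs n) k = w k).
      { unfold ind. destruct Rle_dec; auto. exfalso; apply n0. pose proof (Hrsdec n); lra. }
      pose proof (term_le_series _ k (Hindnn b (rs n)) (Hexi b (rs n))).
      pose proof (HB n). lra. }
    assert (Hpt : forall k, ind c rad w b (rs (S n)) k + ind c rad w z (rs (S n)) k
                            <= ind c rad w b (rs n) k).
    { intro k. unfold ind.
      destruct (Rle_dec (Cmod (b - c k)%C) (rad k + rs (S n))) as [h1|h1];
      destruct (Rle_dec (Cmod (z - c k)%C) (rad k + rs (S n))) as [h2|h2];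
      destruct (Rle_dec (Cmod (b - c k)%C) (rad k + rs n)) as [h3|h3].
      all: try (exfalso; now apply (Hno k)).
      all: try (pose proof (Hw k); lra).
      - exfalso; apply h3. pose proof (Hrsdec n); lra.
      - exfalso; apply h3. pose proof (Cmod_tri3 b z (c k)). rewrite (Cmod_sym b z) in H. lra. }
    assert (Hsum : Series (ind c rad w b (rs (S n))) + Series (ind c rad w z (rs (S n)))
                   <= Series (ind c rad w b (rs n))).
    { rewrite <- Series_plus by auto. apply Series_le; auto.
      intro k; split; auto. pose proof (Hindnn b (rs (S n)) k); pose proof (Hindnn z (rs (S n)) k); lra. }
    assert (HBn : B / 2 ^ n = 2 * (B / 2 ^ (S n))).
    { simpl. field. apply pow_nonzero; lra. }
    destruct (Rlt_dec (Series (ind c rad w b (rs (S n)))) (B / 2 ^ (S n))) as [hl|hl].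
    - exists b. split; [split; auto|].
      replace (b - b)%C with (RtoC 0) by (destruct b; unfold Cminus, Cplus, Copp, RtoC; simpl; f_equal; ring).
      rewrite Cmod_0. pose proof (Hrsdec n); lra.
    - exists z. split; [split; auto|]; auto.
      pose proof (Hindnn z (rs (S n))). lra. }
  set (nxt := fun n b => epsilon (inhabits b)
               (fun b' => P (S n) b' /\ Cmod (b' - b)%C + rs (S n) <= rs n)).
  set (u := fun n => nat_rect (fun _ => C) a (fun m b => nxt m b) n).
  assert (Hu0 : u 0%nat = a) by reflexivity.
  assert (HuS : forall n, u (S n) = nxt n (u n)) by reflexivity.
  assert (HP : forall n, P n (u n) /\ Cmod (u (S n) - u n)%C + rs (S n) <= rs n).
  { induction n.
    - assert (P 0%nat a).
      { split; auto. simpl. unfold Rdiv; rewrite Rinv_1, Rmult_1_r.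
        eapply Rle_lt_trans; [|exact Hlt]. apply Series_le; auto. }
      split; auto. rewrite HuS. unfold nxt.
      exact (proj2 (epsilon_spec (inhabits (u 0%nat)) (fun b' => P 1%nat b' /\ Cmod (b' - u 0%nat)%C + rs 1%nat <= rs 0%nat) (Hstep _ _ H))).
    - destruct IHn as [IH1 IH2].
      assert (P (S n) (u (S n))).
      { rewrite HuS. unfold nxt.
        exact (proj1 (epsilon_spec (inhabits (u n)) (fun b' => P (S n) b' /\ Cmod (b' - u n)%C + rs (S n) <= rs n) (Hstep _ _ IH1))). }
      split; auto. rewrite (HuS (S n)). unfold nxt.
      exact (proj2 (epsilon_spec (inhabits (u (S n))) (fun b' => P (S (S n)) b' /\ Cmod (b' - u (S n))%C + rs (S (S n)) <= rs (S n)) (Hstep _ _ H))). }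
  assert (Hnest : forall n m, Cmod (u (n + m)%nat - u n)%C <= rs n - rs (n + m)%nat).
  { intros n m. induction m.
    - rewrite Nat.add_0_r.
      replace (u n - u n)%C with (RtoC 0) by (destruct (u n); unfold Cminus, Cplus, Copp, RtoC; simpl; f_equal; ring).
      rewrite Cmod_0. lra.
    - rewrite Nat.add_succ_r.
      pose proof (Cmod_tri3 (u (S (n + m))) (u (n + m)%nat) (u n)).
      pose proof (proj2 (HP (n + m)%nat)). lra. }
  assert (Hmono : forall n m, (n <= m)%nat -> rs m <= rs n).
  { intros n m Hnm. replace m with (n + (m - n))%nat by lia.
    pose proof (Hnest n (m - n)%nat). pose proof (Cmod_ge_0 (u (n + (m - n))%nat - u n)%C). lra. }
  assert (Hrs_le : forall n, rs n <= rs 0%nat / 2 ^ n).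
  { induction n; [simpl; lra|]. pose proof (Hdec n). simpl.
    replace (rs 0%nat / (2 * 2 ^ n)) with (rs 0%nat / 2 ^ n / 2) by (field; apply pow_nonzero; lra).
    lra. }
  assert (Hsmall : forall eps, 0 < eps -> exists N, rs N < eps).
  { intros eps He. destruct (geom_small (rs 0%nat) eps He) as [N HN]. exists N.
    pose proof (Hrs_le N); lra. }
  assert (Hcauchy : forall eps, 0 < eps -> exists N, forall n m, (n >= N)%nat -> (m >= N)%nat ->
                      Cmod (u n - u m)%C < eps).
  { intros eps He. destruct (Hsmall eps He) as [N HN]. exists N. intros n m Hn Hm.
    destruct (Nat.le_ge_cases n m) as [Hnm|Hnm].
    - replace m with (n + (m - n))%nat by lia. rewrite Cmod_sym.
      pose proof (Hnest n (m - n)%nat). pose proof (Hrs (n + (m - n))%nat). pose proof (Hmono N n Hn). lra.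
    - replace n with (m + (n - m))%nat by lia.
      pose proof (Hnest m (n - m)%nat). pose proof (Hrs (m + (n - m))%nat). pose proof (Hmono N m Hm). lra. }
  assert (Hc1 : Cauchy_crit (fun n => fst (u n))).
  { intros eps He. destruct (Hcauchy eps He) as [N HN]. exists N. intros n m Hn Hm.
    unfold Rdist. pose proof (Cmod_fst (u n) (u m)). pose proof (HN n m Hn Hm). lra. }
  assert (Hc2 : Cauchy_crit (fun n => snd (u n))).
  { intros eps He. destruct (Hcauchy eps He) as [N HN]. exists N. intros n m Hn Hm.
    unfold Rdist. pose proof (Cmod_snd (u n) (u m)). pose proof (HN n m Hn Hm). lra. }
  destruct (Rcomplete.R_complete _ Hc1) as [lx Hlx].
  destruct (Rcomplete.R_complete _ Hc2) as [ly Hly].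
  set (x := (lx, ly) : C).
  assert (Hconv : forall eps, 0 < eps -> exists N, forall n, (n >= N)%nat -> Cmod (u n - x)%C < eps).
  { intros eps He.
    destruct (Hlx (eps / 4)) as [N1 HN1]; [lra|].
    destruct (Hly (eps / 4)) as [N2 HN2]; [lra|].
    exists (max N1 N2). intros n Hn.
    pose proof (HN1 n ltac:(lia)). pose proof (HN2 n ltac:(lia)).
    unfold Rdist in *. pose proof (Cmod_le_comp (u n) x). unfold x in *; simpl in *. lra. }
  assert (Hxn : forall n, Cmod (x - u n)%C <= rs n).
  { intro n. apply le_epsilon. intros eps He.
    destruct (Hconv eps He) as [N HN].
    pose proof (HN (n + N)%nat ltac:(lia)).
    pose proof (Cmod_tri3 x (u (n + N)%nat) (u n)). rewrite (Cmod_sym x (u (n + N)%nat)) in H0.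
    pose proof (Hnest n N). pose proof (Hrs (n + N)%nat). lra. }
  assert (HEx : E x).
  { apply HE. intros [eps Heps].
    destruct (Hconv eps (cond_pos eps)) as [N HN].
    apply (Heps (u N)); [| exact (proj1 (proj1 (HP N)))].
    pose proof (HN N (le_n N)). rewrite Cmod_sym in H.
    pose proof (Cmod_fst (u N) x). pose proof (Cmod_snd (u N) x).
    rewrite Cmod_sym in H0, H1.
    split; [change (Rabs (fst (u N) - lx) < eps) | change (Rabs (snd (u N) - ly) < eps)]; unfold x in *; simpl in *; lra. }
  destruct (Hcov x) as [k Hk].
  { split; auto. unfold cdisc. rewrite <- Hu0. apply Hxn. }
  assert (Hall : forall n, w k < B / 2 ^ n).
  { intro n. destruct (HP n) as [[_ Hs] _].
    assert (ind c rad w (u n) (rs n) k = w k).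
    { unfold ind. destruct Rle_dec; auto. exfalso; apply n0.
      pose proof (Cmod_tri3 (u n) x (c k)). rewrite (Cmod_sym (u n) x) in H.
      pose proof (Hxn n). lra. }
    pose proof (term_le_series _ k (Hindnn (u n) (rs n)) (Hexi (u n) (rs n))). lra. }
  destruct (geom_small B (w k) (Hw k)) as [n Hn].
  pose proof (Hall n). lra.
Qed.

Lemma gauge_small (g : R -> R) : gauge g -> forall eta, 0 < eta -> exists t, 0 < t /\ g t < eta.
Proof.
  intros [Hp [Hm Hl]] eta He.
  rewrite filterlim_locally in Hl.
  destruct (Hl (mkposreal eta He)) as [d Hd].
  exists (d / 2). assert (0 < d) by apply cond_pos.
  split; [lra|].
  assert (Hb : ball 0 d (d / 2)).
  { change (Rabs (d / 2 - 0) < d). rewrite Rminus_0_r, Rabs_pos_eq; lra. }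
  specialize (Hd (d / 2) Hb ltac:(simpl; lra)).
  change (Rabs (g (d / 2) - 0) < eta) in Hd.
  rewrite Rminus_0_r in Hd. pose proof (Rle_abs (g (d / 2))). lra.
Qed.

Lemma geom_series (q : R) : is_series (fun k => q * (/ 2) ^ k) (2 * q).
Proof.
  assert (H := is_series_geom (/ 2) ltac:(rewrite Rabs_pos_eq; lra)).
  apply (@is_series_scal_l R_AbsRing R_NormedModule q) in H.
  replace (2 * q) with (scal q (/ (1 - / 2))).
  - exact H.
  - change (q * / (1 - / 2) = 2 * q). field.
Qed.

Lemma content_ub (g : R -> R) (Hg : gauge g) (F : C -> Prop) (a : C) (rho : R)
  (Hrho : 0 < rho) (HF : forall z, F z -> Cmod (z - a)%C <= rho) (eps : R) (Heps : 0 < eps) :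
  Rbar_le (hausdorff_content g F) (Finite (g (2 * rho) + eps)).
Proof.
  set (d := fun k : nat => epsilon (inhabits 1) (fun t => 0 < t /\ g (2 * t) < eps / 2 * (/ 2) ^ k)).
  assert (Hd : forall k, 0 < d k /\ g (2 * d k) < eps / 2 * (/ 2) ^ k).
  { intro k. unfold d. apply epsilon_spec.
    destruct (gauge_small g Hg (eps / 2 * (/ 2) ^ k)) as [t [Ht1 Ht2]].
    { apply Rmult_lt_0_compat; [lra| apply pow_lt; lra]. }
    exists (t / 2). split; [lra|]. replace (2 * (t / 2)) with t by field. exact Ht2. }
  set (rad := fun k : nat => match k with O => rho | S k' => d k' end).
  set (w := fun k => g (2 * rad k)).
  destruct Hg as [Hp [Hm Hl]].
  assert (Hgeo := geom_series (eps / 2)).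
  assert (HexS : ex_series (fun k => w (S k))).
  { apply (@ex_series_le R_AbsRing R_CompleteNormedModule _ (fun k => eps / 2 * (/ 2) ^ k)).
    - intro k. change (Rabs (w (S k)) <= eps / 2 * (/ 2) ^ k).
      unfold w, rad. destruct (Hd k) as [h1 h2].
      rewrite Rabs_pos_eq; [lra|]. left; apply Hp; lra.
    - exists (2 * (eps / 2)). exact Hgeo. }
  assert (Hex : ex_series w) by (apply ex_series_incr_1; exact HexS).
  assert (Hsum : Series w <= g (2 * rho) + eps).
  { rewrite Series_incr_1 by exact Hex.
    assert (Series (fun k => w (S k)) <= Series (fun k => eps / 2 * (/ 2) ^ k)).
    { apply Series_le; [| exists (2 * (eps / 2)); exact Hgeo].
      intro k. unfold w, rad. destruct (Hd k) as [h1 h2]. split; [left; apply Hp; lra| lra]. }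
    rewrite (is_series_unique _ _ Hgeo) in H.
    unfold w at 1, rad at 1. lra. }
  apply (Rbar_le_trans _ (Finite (Series w))); [| simpl; exact Hsum].
  unfold hausdorff_content.
  apply (proj1 (Glb_Rbar_correct (covering_sums g F))).
  exists (fun _ => a), rad. split; [|split; [|split]].
  - intros [|k]; simpl; [lra| apply (Hd k)].
  - intros z Hz. exists 0%nat. simpl. apply HF; auto.
  - exact Hex.
  - reflexivity.
Qed.

Lemma mk_gauge (F : R -> R) (T : R) (HT : 0 < T)
  (Fpos : forall t, 0 < t <= T -> 0 < F t)
  (Fmon : forall s t, 0 < s -> s <= t -> t <= T -> F s <= F t)
  (Fsmall : forall eta, 0 < eta -> exists t, 0 < t <= T /\ F t < eta) :
  gauge (fun t => F (Rmin t T)).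
Proof.
  split; [|split].
  - intros t Ht. apply Fpos. split.
    + apply Rmin_glb_lt; auto.
    + apply Rmin_r.
  - intros s t Hs Hst. apply Fmon.
    + apply Rmin_glb_lt; auto.
    + apply Rle_min_compat_r; auto.
    + apply Rmin_r.
  - apply filterlim_locally. intros eps.
    destruct (Fsmall eps (cond_pos eps)) as [t [Ht Hft]].
    exists (mkposreal t (proj1 Ht)). intros y Hy Hy0. simpl in Hy0.
    change (Rabs (y - 0) < t) in Hy. rewrite Rminus_0_r, Rabs_pos_eq in Hy by lra.
    change (Rabs (F (Rmin y T) - 0) < eps).
    rewrite Rmin_left by lra. rewrite Rminus_0_r.
    assert (0 < F y) by (apply Fpos; lra).
    assert (F y <= F t) by (apply Fmon; lra).
    rewrite Rabs_pos_eq; lra.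
Qed.

Lemma exp_le_mono (x y : R) : x <= y -> exp x <= exp y.
Proof. intros [H|H]; [left; apply exp_increasing; auto| subst; lra]. Qed.

Lemma exp_le_inv' (x y : R) : exp x <= exp y -> x <= y.
Proof. intros [H|H]; [left; apply exp_lt_inv; auto| apply exp_inv in H; lra]. Qed.

Lemma ln_le_sub1 (x : R) : 0 < x -> ln x <= x - 1.
Proof. intros Hx. pose proof (exp_ineq1_le (ln x)). rewrite exp_ln in H; lra. Qed.

Lemma ln_ratio (p q : R) : 0 < p -> p <= q -> ln q - ln p <= (q - p) / p.
Proof.
  intros Hp Hpq.
  replace (ln q - ln p) with (ln (q / p)).
  - replace ((q - p) / p) with (q / p - 1) by (field; lra).
    apply ln_le_sub1. apply Rdiv_lt_0_compat; lra.
  - unfold Rdiv. rewrite ln_mult, ln_Rinv; try lra. apply Rinv_0_lt_compat; lra.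
Qed.

Lemma pow2_exp (n : nat) : 2 ^ n = exp (INR n * ln 2).
Proof. rewrite <- (Rpower_pow n 2) by lra. reflexivity. Qed.

Lemma ln_div (x y : R) : 0 < x -> 0 < y -> ln (x / y) = ln x - ln y.
Proof. intros. unfold Rdiv. rewrite ln_mult, ln_Rinv; try lra. apply Rinv_0_lt_compat; lra. Qed.

Lemma ln2_pos : 0 < ln 2.
Proof. pose proof ln_lt_2; lra. Qed.

Lemma ln2_lt1 : ln 2 < 1.
Proof.
  pose proof (exp_ineq1 1 ltac:(lra)).
  rewrite <- (ln_exp 1). apply ln_increasing; lra.
Qed.

Lemma ln_neg_pos (t : R) : 0 < t < 1 -> 0 < - ln t.
Proof. intros. pose proof (ln_increasing t 1 ltac:(lra) ltac:(lra)). rewrite ln_1 in H0. lra. Qed.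

Lemma ln_one_over (t : R) : 0 < t -> ln (1 / (1 * t)) = - ln t.
Proof. intros. rewrite Rmult_1_l. unfold Rdiv. rewrite Rmult_1_l, ln_Rinv; auto. Qed.

Lemma part1_fwd (E : C -> Prop) (HE : closed E) :
  (exists alpha, 1 < alpha /\ condU1 alpha E) ->
  exists (A Cc r0 gamma : R) (g : R -> R),
      0 < A /\ 0 < Cc /\ 0 < r0 /\ 0 < gamma /\ gauge g /\
      (forall t, 0 < t < 2 * r0 -> g t = Rpower (ln (1 / (Cc * t))) (- gamma)) /\
      (forall a r, E a -> 0 < r < r0 ->
         Rbar_le (Finite (A * g (2 * r)))
                 (hausdorff_content g (fun z => E z /\ cdisc a r z))).
Proof.
  intros [alpha [Ha1 [C [R0 [HC [HR0 [_ [_ [Hle Hann]]]]]]]]].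
  set (H := fun rho => C * Rpower rho alpha).
  assert (HH : forall rho, 0 < rho -> C * h1 alpha rho = H rho).
  { intros; unfold h1; destruct Rle_dec; [lra| reflexivity]. }
  assert (Hla : 0 < ln alpha).
  { pose proof (ln_increasing 1 alpha ltac:(lra) Ha1). rewrite ln_1 in H0; lra. }
  set (la := ln alpha) in *.
  pose proof ln2_pos as Hl2.
  set (gamma := ln 2 / la).
  assert (Hgam : 0 < gamma) by (apply Rdiv_lt_0_compat; auto).
  assert (Hgla : gamma * la = ln 2) by (unfold gamma; field; lra).
  set (kap := ln 4 - ln C + alpha * ln 2).
  set (K := Rmax 0 kap / (alpha - 1)).
  assert (HK0 : 0 <= K) by (apply Rdiv_le_0_compat; [apply Rmax_l| lra]).
  assert (HK1 : kap <= (alpha - 1) * K).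
  { unfold K. replace ((alpha - 1) * (Rmax 0 kap / (alpha - 1))) with (Rmax 0 kap) by (field; lra).
    apply Rmax_r. }
  set (r0 := Rmin (Rmin R0 (1/4)) (exp (-(K + 2 * ln 2)))).
  assert (Hr0pos : 0 < r0).
  { unfold r0. apply Rmin_glb_lt; [apply Rmin_glb_lt; lra| apply exp_pos]. }
  assert (Hr0R0 : r0 <= R0) by (unfold r0; eapply Rle_trans; [apply Rmin_l| apply Rmin_l]).
  assert (Hr014 : r0 <= 1/4) by (unfold r0; eapply Rle_trans; [apply Rmin_l| apply Rmin_r]).
  assert (Hr0e : r0 <= exp (-(K + 2 * ln 2))) by (unfold r0; apply Rmin_r).
  set (A := exp (- gamma * ln 2) / 2).
  set (T := 2 * r0).
  set (F := fun t => Rpower (ln (1 / (1 * t))) (- gamma)).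
  assert (Fln : forall t, 0 < t < 1 -> F t = exp (- gamma * ln (- ln t))).
  { intros t Ht. unfold F, Rpower. rewrite ln_one_over by lra. reflexivity. }
  assert (Hgauge : gauge (fun t => F (Rmin t T))).
  { apply mk_gauge; [unfold T; lra| | |].
    - intros t Ht. unfold F, Rpower. apply exp_pos.
    - intros s t Hs Hst HtT. rewrite !Fln by (unfold T in *; lra).
      apply exp_le_mono.
      assert (ln t <= 0) by (pose proof (ln_neg_pos t ltac:(unfold T in *; lra)); lra).
      assert (ln s <= ln t) by (apply ln_le; lra).
      assert (ln (- ln t) <= ln (- ln s)) by (apply ln_le; [apply ln_neg_pos; unfold T in *; lra| lra]).
      nra.
    - intros eta Heta.
      assert (HT1 : 0 < - ln T) by (apply ln_neg_pos; unfold T; lra).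
      set (M := Rmax (ln (- ln T)) (- ln eta / gamma) + 1).
      exists (exp (- exp M)). split; [split|].
      + apply exp_pos.
      + assert (ln (- ln T) <= M) by (unfold M; pose proof (Rmax_l (ln (- ln T)) (- ln eta / gamma)); lra).
        apply exp_le_mono in H0. rewrite exp_ln in H0 by auto.
        rewrite <- (exp_ln T) by (unfold T; lra). apply exp_le_mono. lra.
      + rewrite Fln.
        * rewrite ln_exp, Ropp_involutive, ln_exp.
          rewrite <- (exp_ln eta) by auto. apply exp_increasing.
          assert (- ln eta / gamma < M) by (unfold M; pose proof (Rmax_r (ln (- ln T)) (- ln eta / gamma)); lra).
          apply (Rmult_lt_compat_l gamma) in H0; auto.
          replace (gamma * (- ln eta / gamma)) with (- ln eta) in H0 by (field; lra). lra.
        * split; [apply exp_pos|]. rewrite <- exp_0. apply exp_increasing.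
          pose proof (exp_pos M); lra. }
  exists A, 1, r0, gamma, (fun t => F (Rmin t T)).
  split; [unfold A; apply Rdiv_lt_0_compat; [apply exp_pos| lra]|].
  split; [lra|]. split; [auto|]. split; [auto|].
  split; [exact Hgauge|].
  split.
  { intros t Ht. rewrite Rmin_left by (unfold T; lra). reflexivity. }
  intros a r Ea [Hr Hrr0].
  set (rs := fun n => nat_rect (fun _ => R) r (fun _ x => H (x / 2) / 4) n).
  assert (rsS : forall n, rs (S n) = H (rs n / 2) / 4) by reflexivity.
  assert (Hinv : forall n, 0 < rs n /\ rs n <= r).
  { induction n; [simpl; lra|].
    destruct IHn as [h1 h2]. rewrite rsS.
    assert (0 < H (rs n / 2)) by (unfold H, Rpower; pose proof (exp_pos (alpha * ln (rs n / 2))); nra).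
    pose proof (Hle (rs n / 2) ltac:(lra)). rewrite HH in H1 by lra.
    split; lra. }
  assert (Hdec8 : forall n, rs (S n) <= rs n / 8).
  { intro n. rewrite rsS. destruct (Hinv n).
    pose proof (Hle (rs n / 2) ltac:(lra)). rewrite HH in H2 by lra. lra. }
  set (ts := fun n => 2 * rs (S n)).
  set (x := fun n => - ln (rs n)).
  assert (Hxpos : forall n, 0 < x n).
  { intro n. destruct (Hinv n). apply ln_neg_pos. lra. }
  assert (HxS : forall n, x (S n) = alpha * x n + kap).
  { intro n. unfold x. rewrite rsS. destruct (Hinv n). unfold H, Rpower, kap.
    rewrite ln_div by (pose proof (exp_pos (alpha * ln (rs n / 2))); nra || lra).
    rewrite ln_mult, ln_exp, ln_div by (try apply exp_pos; lra).
    replace 4 with (2 * 2) by ring. rewrite ln_mult by lra. ring. }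
  set (y := fun n => x n + K).
  assert (Hy : forall n, 0 < y n /\ ln (y n) <= INR n * la + ln (y 0%nat)).
  { induction n.
    - split; [unfold y; pose proof (Hxpos 0%nat); lra| simpl; lra].
    - destruct IHn as [h1 h2]. split; [unfold y; pose proof (Hxpos (S n)); lra|].
      assert (y (S n) <= alpha * y n) by (unfold y; rewrite HxS; nra).
      assert (ln (y (S n)) <= ln (alpha * y n)) by (apply ln_le; auto; unfold y; pose proof (Hxpos (S n)); lra).
      rewrite ln_mult in H1 by lra. rewrite S_INR. fold la in H1. lra. }
  set (B := exp (- gamma * ln (y 0%nat)) / 2).
  assert (HB : forall n, B / 2 ^ n <= F (Rmin (ts n) T)).
  { intro n. destruct (Hinv (S n)) as [h1 h2]. pose proof (Hdec8 n). destruct (Hinv n).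
    rewrite Rmin_left by (unfold ts, T; lra).
    rewrite Fln by (unfold ts; lra).
    assert (Hlt : - ln (ts n) = x (S n) - ln 2).
    { unfold ts, x. rewrite ln_mult by lra. ring. }
    assert (0 < - ln (ts n)) by (apply ln_neg_pos; unfold ts; lra).
    assert (ln (- ln (ts n)) <= ln (y (S n))) by (apply ln_le; auto; unfold y; lra).
    destruct (Hy (S n)) as [_ Hy2]. rewrite S_INR in Hy2.
    replace (B / 2 ^ n) with (exp (- gamma * ln (y 0%nat) - (INR n + 1) * ln 2)).
    - apply exp_le_mono.
      assert (HG : gamma * ln (- ln (ts n)) <= gamma * ((INR n + 1) * la + ln (y 0%nat))).
      { apply Rmult_le_compat_l; lra. }
      replace (gamma * ((INR n + 1) * la + ln (y 0%nat))) with ((INR n + 1) * (gamma * la) + gamma * ln (y 0%nat)) in HG by ring.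
      rewrite Hgla in HG. lra.
    - unfold B. rewrite pow2_exp.
      replace (- gamma * ln (y 0%nat) - (INR n + 1) * ln 2) with
        (- gamma * ln (y 0%nat) + - (INR n * ln 2) + - ln 2) by ring.
      rewrite !exp_plus, !exp_Ropp, exp_ln by lra. field.
      apply Rgt_not_eq, exp_pos. }
  apply (Rbar_le_trans _ (Finite B)).
  - simpl. rewrite Rmin_left by (unfold T; lra).
    rewrite Fln by lra.
    assert (Hx0 : x 0%nat = - ln r) by reflexivity.
    assert (- ln (2 * r) = x 0%nat - ln 2) by (rewrite Hx0, ln_mult; lra).
    assert (0 < - ln (2 * r)) by (apply ln_neg_pos; lra).
    assert (HxK : K + 2 * ln 2 <= x 0%nat).
    { rewrite Hx0. assert (ln r <= ln (exp (-(K + 2 * ln 2)))) by (apply ln_le; lra).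
      rewrite ln_exp in H2. lra. }
    assert (ln (y 0%nat) <= ln 2 + ln (- ln (2 * r))).
    { rewrite <- ln_mult by lra. apply ln_le; [unfold y; lra|]. unfold y. lra. }
    unfold A, B. rewrite <- Rmult_div_swap, <- exp_plus.
    apply Rmult_le_compat_r; [lra|]. apply exp_le_mono.
    assert (gamma * ln (y 0%nat) <= gamma * (ln 2 + ln (- ln (2 * r)))) by (apply Rmult_le_compat_l; lra).
    lra.
  - change (Rbar_le (Finite B) (hausdorff_content (fun t : R => F (Rmin t T))
                    (fun z => E z /\ cdisc a (rs 0%nat) z))).
    apply content_lb with (ts := ts); auto.
    + intros t Ht. unfold F, Rpower. apply exp_pos.
    + intros s t Hs Hst.
      apply (proj1 (proj2 Hgauge)); auto.
    + intro n; apply Hinv.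
    + intro n; unfold ts; pose proof (proj1 (Hinv (S n))); lra.
    + intro n; pose proof (Hdec8 n); pose proof (proj1 (Hinv n)); lra.
    + intros n b Eb. destruct (Hinv n) as [h1 h2].
      destruct (Hann b Eb (rs n / 2) ltac:(lra)) as [z [Ez [Hz1 Hz2]]].
      rewrite HH in Hz1 by lra.
      exists z. split; auto. unfold ts. rewrite rsS. split; lra.
Qed.

Lemma Rbar_le_fin_trans (x y : R) (c : Rbar) :
  Rbar_le (Finite x) c -> Rbar_le c (Finite y) -> x <= y.
Proof. intros H1 H2. exact (Rbar_le_trans _ _ _ H1 H2). Qed.

Lemma part1_bwd (E : C -> Prop) (HE : closed E) :
  (exists (A Cc r0 gamma : R) (g : R -> R),
      0 < A /\ 0 < Cc /\ 0 < r0 /\ 0 < gamma /\ gauge g /\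
      (forall t, 0 < t < 2 * r0 -> g t = Rpower (ln (1 / (Cc * t))) (- gamma)) /\
      (forall a r, E a -> 0 < r < r0 ->
         Rbar_le (Finite (A * g (2 * r)))
                 (hausdorff_content g (fun z => E z /\ cdisc a r z)))) ->
  exists alpha, 1 < alpha /\ condU1 alpha E.
Proof.
  intros [A [Cc [r0 [gamma [g [HA [HCc [Hr0 [Hgam [Hg [Hform Hlb]]]]]]]]]]].
  pose proof ln2_pos as Hl2.
  set (m := ln Cc).
  set (s := Rmax 1 (2 * ln 2 - ln A / gamma + 1)).
  assert (Hs1 : 1 <= s) by apply Rmax_l.
  assert (Hskey : 2 * gamma * ln 2 < gamma * s + ln A).
  { assert (2 * ln 2 - ln A / gamma + 1 <= s) by apply Rmax_r.
    apply (Rmult_le_compat_l gamma) in H; [|lra].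
    replace (gamma * (2 * ln 2 - ln A / gamma + 1)) with (2 * gamma * ln 2 - ln A + gamma) in H by (field; lra).
    lra. }
  set (alpha := exp s).
  assert (Hal : 1 < alpha) by (unfold alpha; rewrite <- exp_0; apply exp_increasing; lra).
  assert (Hlnal : ln alpha = s) by (unfold alpha; apply ln_exp).
  set (M0 := 2 * Rabs m + 2).
  set (R0 := Rmin (Rmin r0 (1/2)) (exp (- M0))).
  assert (HR0 : 0 < R0) by (unfold R0; apply Rmin_glb_lt; [apply Rmin_glb_lt; lra| apply exp_pos]).
  assert (HR0r0 : R0 <= r0) by (unfold R0; eapply Rle_trans; [apply Rmin_l| apply Rmin_l]).
  assert (HR012 : R0 <= 1/2) by (unfold R0; eapply Rle_trans; [apply Rmin_l| apply Rmin_r]).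
  assert (HR0e : R0 <= exp (- M0)) by (unfold R0; apply Rmin_r).
  assert (Hpw : forall r, 0 < r < 1 -> Rpower r alpha <= r).
  { intros r Hr. unfold Rpower. rewrite <- (exp_ln r) at 2 by lra. apply exp_le_mono.
    pose proof (ln_neg_pos r Hr). nra. }
  exists alpha. split; auto.
  exists (1/2), R0. split; [lra|]. split; [auto|].
  split; [exact HE|]. split; [|split].
  - intros r s' Hr Hrs Hs. unfold h1.
    destruct (Rle_dec r 0); destruct (Rle_dec s' 0).
    + lra.
    + unfold Rpower. pose proof (exp_pos (alpha * ln s')). lra.
    + lra.
    + apply Rmult_le_compat_l; [lra|]. apply Rle_Rpower_l; lra.
  - intros r [Hr HrR]. unfold h1. destruct Rle_dec; [lra|].
    pose proof (Hpw r ltac:(lra)). lra.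
  - intros a Ea r [Hr HrR]. apply NNPP. intro Hno.
    assert (Hh1 : h1 alpha r = Rpower r alpha) by (unfold h1; destruct Rle_dec; [lra| reflexivity]).
    set (rho := 1/2 * Rpower r alpha).
    assert (Hrho : 0 < rho) by (unfold rho, Rpower; pose proof (exp_pos (alpha * ln r)); lra).
    assert (HF : forall z, E z /\ cdisc a r z -> Cmod (z - a)%C <= rho).
    { intros z [Ez Hz]. unfold cdisc in Hz. destruct (Rle_lt_dec (Cmod (z - a)%C) rho) as [|hl]; auto.
      exfalso. apply Hno. exists z. split; auto. rewrite Hh1. fold rho. lra. }
    assert (Hkey : A * g (2 * r) <= g (2 * rho)).
    { apply le_epsilon. intros eps He.
      apply (Rbar_le_fin_trans _ _ _ (Hlb a r Ea ltac:(lra)) (content_ub g Hg _ a rho Hrho HF eps He)). }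
    assert (HL : M0 < - ln r).
    { assert (ln r < ln (exp (- M0))) by (apply ln_increasing; lra). rewrite ln_exp in H; lra. }
    set (L := - ln r) in *.
    assert (Hm : Rabs m >= 0) by (pose proof (Rabs_pos m); lra).
    pose proof (Rle_abs m). pose proof (Rle_abs (- m)). rewrite Rabs_Ropp in H0.
    assert (Hg1 : g (2 * r) = exp (- gamma * ln (L - m - ln 2))).
    { rewrite Hform by lra. unfold Rpower. f_equal. f_equal. f_equal.
      unfold Rdiv. rewrite Rmult_1_l, ln_Rinv, !ln_mult by (lra || nra). unfold L, m. ring. }
    assert (Hg2 : g (2 * rho) = exp (- gamma * ln (alpha * L - m))).
    { assert (2 * rho <= r) by (unfold rho; pose proof (Hpw r ltac:(lra)); lra).
      rewrite Hform by lra. unfold Rpower. f_equal. f_equal. f_equal.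
      unfold rho, Rpower. replace (2 * (1 / 2 * exp (alpha * ln r))) with (exp (alpha * ln r)) by field.
      unfold Rdiv. rewrite Rmult_1_l, ln_Rinv, ln_mult, ln_exp.
      - unfold L, m. ring.
      - lra.
      - apply exp_pos.
      - pose proof (exp_pos (alpha * ln r)). nra. }
    unfold M0 in HL. pose proof ln2_lt1.
    assert (HP1 : 0 < L - m - ln 2 <= 2 * L) by (split; lra).
    assert (HP2 : alpha * L / 2 <= alpha * L - m) by nra.
    assert (HLpos : 0 < L) by lra.
    assert (ln (L - m - ln 2) <= ln 2 + ln L).
    { rewrite <- ln_mult by lra. apply ln_le; lra. }
    assert (s + ln L - ln 2 <= ln (alpha * L - m)).
    { rewrite <- Hlnal, <- ln_mult by lra. rewrite <- ln_div by nra. apply ln_le; nra. }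
    rewrite Hg1, Hg2 in Hkey.
    rewrite <- (exp_ln A) in Hkey at 1 by lra. rewrite <- exp_plus in Hkey.
    apply exp_le_inv' in Hkey.
    assert (gamma * ln (L - m - ln 2) <= gamma * (ln 2 + ln L)) by (apply Rmult_le_compat_l; lra).
    assert (gamma * (s + ln L - ln 2) <= gamma * ln (alpha * L - m)) by (apply Rmult_le_compat_l; lra).
    lra.
Qed.

Definition psi (u : R) : R := u / ln (u + ln 2).

Lemma div_le_cross (u v a b : R) : 0 < a -> 0 < b -> u * b <= v * a -> u / a <= v / b.
Proof.
  intros Ha Hb H.
  replace (u / a) with (u * b * / (a * b)) by (field; lra).
  replace (v / b) with (v * a * / (a * b)) by (field; lra).
  apply Rmult_le_compat_r; [left; apply Rinv_0_lt_compat; nra| exact H].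
Qed.

Lemma psi_mono (u v : R) : 0 <= u -> u <= v -> 1 <= ln (u + ln 2) -> psi u <= psi v.
Proof.
  intros Hu Huv Hl. unfold psi. pose proof ln2_pos.
  assert (Hb : ln (u + ln 2) <= ln (v + ln 2)) by (apply ln_le; lra).
  pose proof (ln_ratio (u + ln 2) (v + ln 2) ltac:(lra) ltac:(lra)) as Hr.
  apply div_le_cross; try lra.
  assert (u * ((v + ln 2 - (u + ln 2)) / (u + ln 2)) <= v - u).
  { replace (u * ((v + ln 2 - (u + ln 2)) / (u + ln 2))) with ((v - u) * (u / (u + ln 2))) by (field; lra).
    assert (u / (u + ln 2) <= 1).
    { apply (Rmult_le_reg_r (u + ln 2)); [lra|]. unfold Rdiv. rewrite Rmult_assoc, Rinv_l by lra. lra. }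
    assert (0 <= u / (u + ln 2)) by (apply Rdiv_le_0_compat; lra).
    nra. }
  assert (u * (ln (v + ln 2) - ln (u + ln 2)) <= u * ((v + ln 2 - (u + ln 2)) / (u + ln 2))).
  { apply Rmult_le_compat_l; auto. }
  nra.
Qed.

Lemma psi_step (x kap beta : R) :
  0 <= x -> 0 < beta -> 1 <= ln (x + ln 2) -> Rabs kap <= beta * ln (x + ln 2) ->
  0 <= kap + beta * ln (x + ln 2) ->
  psi (x + (kap + beta * ln (x + ln 2))) <= psi x + 2 * beta.
Proof.
  intros Hx Hb Hl Hk Hd. unfold psi. pose proof ln2_pos.
  set (l := ln (x + ln 2)) in *. set (d := kap + beta * l) in *.
  assert (Hl2 : l <= ln (x + d + ln 2)) by (apply ln_le; lra).
  assert ((x + d) / ln (x + d + ln 2) <= (x + d) / l).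
  { apply div_le_cross; try lra. nra. }
  assert ((x + d) / l = x / l + kap / l + beta) by (unfold d; field; lra).
  assert (kap / l <= beta).
  { apply (Rmult_le_reg_r l); [lra|]. unfold Rdiv. rewrite Rmult_assoc, Rinv_l by lra.
    pose proof (Rle_abs kap). lra. }
  lra.
Qed.

Lemma exp2_le9 : exp 2 <= 9.
Proof.
  replace 2 with (1 + 1) by ring. rewrite exp_plus. pose proof exp_le_3.
  pose proof (exp_pos 1). nra.
Qed.

Lemma beta_ln_le (L beta : R) : 0 < beta -> 1 <= L -> 4 * beta ^ 2 <= L -> beta * ln L <= L.
Proof.
  intros Hb HL H4.
  assert (Hs : 0 < sqrt L) by (apply sqrt_lt_R0; lra).
  assert (HsL : sqrt L * sqrt L = L) by (apply sqrt_sqrt; lra).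
  assert (Hln : ln L = 2 * ln (sqrt L)).
  { rewrite <- HsL at 1. rewrite ln_mult by lra. ring. }
  pose proof (ln_le_sub1 (sqrt L) Hs).
  assert (2 * beta <= sqrt L).
  { rewrite <- (sqrt_square (2 * beta)) by lra. apply sqrt_le_1_alt. nra. }
  rewrite Hln. nra.
Qed.

Lemma psi_jump (L beta : R) :
  0 < beta -> 9 <= L -> beta * ln L <= L ->
  psi L + beta / 8 <= psi (L + (ln 2 + beta * ln L)).
Proof.
  intros Hb HL HbL. unfold psi. pose proof ln2_pos. pose proof ln2_lt1.
  set (c := ln 2) in *.
  set (d := c + beta * ln L).
  assert (HlnL : ln 2 <= ln L) by (apply ln_le; lra). fold c in HlnL.
  assert (Hd0 : 0 <= d) by (unfold d; nra).
  set (l := ln (L + c)).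
  assert (Hl2 : 2 <= l).
  { unfold l. rewrite <- (ln_exp 2). apply ln_le; [apply exp_pos|]. pose proof exp2_le9. lra. }
  assert (HlL : l <= 2 * ln L).
  { unfold l. assert (ln (L + c) <= ln (2 * L)) by (apply ln_le; lra).
    rewrite ln_mult in H1 by lra. fold c in H1. lra. }
  set (e := d / (L + c)).
  assert (He0 : 0 <= e) by (apply Rdiv_le_0_compat; lra).
  assert (He1 : e <= 1).
  { unfold e. apply (Rmult_le_reg_r (L + c)); [lra|]. unfold Rdiv. rewrite Rmult_assoc, Rinv_l by lra.
    unfold d. lra. }
  assert (HLe : L * e <= d).
  { unfold e. replace (L * (d / (L + c))) with (d * (L / (L + c))) by (field; lra).
    assert (L / (L + c) <= 1).
    { apply (Rmult_le_reg_r (L + c)); [lra|]. unfold Rdiv. rewrite Rmult_assoc, Rinv_l by lra. lra. }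
    nra. }
  assert (HD : ln (L + d + c) <= l + e).
  { pose proof (ln_ratio (L + c) (L + d + c) ltac:(lra) ltac:(lra)).
    unfold e, l. replace (L + d + c - (L + c)) with d in H1 by ring. lra. }
  assert (Hpos : 0 < ln (L + d + c)).
  { assert (l <= ln (L + d + c)) by (apply ln_le; lra). lra. }
  assert (Hb2 : beta * l <= 2 * d) by (unfold d; nra).
  assert ((L + d) / (l + e) <= (L + d) / ln (L + d + c)).
  { apply div_le_cross; try lra. nra. }
  assert (L / l + beta / 8 <= (L + d) / (l + e)).
  { assert (Hnum : 0 <= (L + d) * 8 * l - 8 * L * (l + e) - beta * l * (l + e)).
    { nra. }
    assert ((L + d) / (l + e) - (L / l + beta / 8) =
            ((L + d) * 8 * l - 8 * L * (l + e) - beta * l * (l + e)) / (8 * l * (l + e))) by (field; lra).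
    assert (0 <= ((L + d) * 8 * l - 8 * L * (l + e) - beta * l * (l + e)) / (8 * l * (l + e))).
    { apply Rdiv_le_0_compat; [lra| nra]. }
    lra. }
  replace (L + d + c) with (L + (c + beta * ln L) + c) in * by (unfold d; ring).
  unfold d in *. lra.
Qed.

Lemma psi_big (sg : R) : 2 <= sg -> sg / 2 <= psi (sg ^ 2 - ln 2).
Proof.
  intros H. unfold psi. pose proof ln2_pos. pose proof ln2_lt1.
  replace (sg ^ 2 - ln 2 + ln 2) with (sg * sg) by ring.
  rewrite ln_mult by lra.
  assert (0 < ln sg) by (rewrite <- ln_1; apply ln_increasing; lra).
  pose proof (ln_le_sub1 sg ltac:(lra)).
  apply div_le_cross; try lra. nra.
Qed.

Lemma formula2 (t : R) : 0 < t -> ln (2 / t) / ln (ln (4 / t)) = psi (ln (2 / t)).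
Proof.
  intros Ht. unfold psi. f_equal. f_equal.
  replace (4 / t) with (2 * (2 / t)) by (field; lra).
  rewrite ln_mult; [ring| lra| apply Rdiv_lt_0_compat; lra].
Qed.

Lemma ln_2_over (t : R) : 0 < t -> ln (2 / t) = ln 2 - ln t.
Proof. intros. apply ln_div; lra. Qed.

Lemma part2_fwd (E : C -> Prop) (HE : closed E) :
  (exists beta, 0 < beta /\ condU2 beta E) ->
   (exists (A r0 eta : R) (g : R -> R),
      0 < A /\ 0 < r0 /\ 0 < eta /\ gauge g /\
      (forall t, 0 < t < 2 * r0 ->
         g t = exp (- eta * (ln (2 / t) / ln (ln (4 / t))))) /\
      (forall a r, E a -> 0 < r < r0 ->
         Rbar_le (Finite (A * g (2 * r)))
                 (hausdorff_content g (fun z => E z /\ cdisc a r z)))).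
Proof.
  intros [beta [Hb [C [R0 [HC [HR0 [_ [_ [Hle Hann]]]]]]]]].
  pose proof ln2_pos as Hl2. pose proof ln2_lt1 as Hl21.
  set (H := fun rho => C * (rho * Rpower (ln (1 / rho)) (- beta))).
  assert (HH : forall rho, 0 < rho -> C * h2 beta rho = H rho).
  { intros; unfold h2; destruct Rle_dec; [lra| reflexivity]. }
  set (eta := ln 2 / (2 * beta)).
  assert (Heta : 0 < eta) by (apply Rdiv_lt_0_compat; lra).
  assert (Hetab : eta * (2 * beta) = ln 2) by (unfold eta; field; lra).
  set (kap := ln 2 + ln 4 - ln C).
  set (Xl := Rmax 1 (Rabs kap / beta)).
  set (X := exp Xl).
  assert (HXl1 : 1 <= Xl) by apply Rmax_l.
  assert (HXl2 : Rabs kap / beta <= Xl) by apply Rmax_r.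
  assert (HXk : Rabs kap <= beta * Xl).
  { apply (Rmult_le_compat_l beta) in HXl2; [|lra].
    replace (beta * (Rabs kap / beta)) with (Rabs kap) in HXl2 by (field; lra). lra. }
  assert (HX1 : 1 < X) by (unfold X; rewrite <- exp_0; apply exp_increasing; lra).
  assert (HlnX : ln X = Xl) by (unfold X; apply ln_exp).
  set (r0 := Rmin (Rmin R0 (1/4)) (exp (- X))).
  assert (Hr0pos : 0 < r0).
  { unfold r0. apply Rmin_glb_lt; [apply Rmin_glb_lt; lra| apply exp_pos]. }
  assert (Hr0R0 : r0 <= R0) by (unfold r0; eapply Rle_trans; [apply Rmin_l| apply Rmin_l]).
  assert (Hr014 : r0 <= 1/4) by (unfold r0; eapply Rle_trans; [apply Rmin_l| apply Rmin_r]).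
  assert (Hr0e : r0 <= exp (- X)) by (unfold r0; apply Rmin_r).
  assert (HlnR : forall t, 0 < t <= r0 -> X <= - ln t).
  { intros t Ht. assert (ln t <= ln (exp (- X))) by (apply ln_le; lra). rewrite ln_exp in H0. lra. }
  set (T := 2 * r0).
  set (F := fun t => exp (- eta * (ln (2 / t) / ln (ln (4 / t))))).
  assert (FP : forall t, 0 < t -> F t = exp (- eta * psi (ln (2 / t)))).
  { intros t Ht. unfold F. rewrite formula2; auto. }
  assert (HuT : forall t, 0 < t <= T -> X <= ln (2 / t) /\ 1 <= ln (ln (2 / t) + ln 2)).
  { intros t Ht. rewrite ln_2_over by lra.
    assert (X <= ln 2 - ln t).
    { pose proof (HlnR (t / 2) ltac:(unfold T in Ht; lra)). rewrite ln_div in H0 by lra. lra. }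
    split; auto. rewrite <- HlnX in HXl1. eapply Rle_trans; [exact HXl1|]. apply ln_le; lra. }
  assert (Hgauge : gauge (fun t => F (Rmin t T))).
  { apply mk_gauge; [unfold T; lra| | |].
    - intros t Ht. apply exp_pos.
    - intros s t Hs Hst HtT. rewrite !FP by lra. apply exp_le_mono.
      destruct (HuT t ltac:(lra)) as [h1 h2].
      assert (ln (2 / t) <= ln (2 / s)).
      { rewrite !ln_2_over by lra. assert (ln s <= ln t) by (apply ln_le; lra). lra. }
      assert (psi (ln (2 / t)) <= psi (ln (2 / s))) by (apply psi_mono; auto; lra).
      nra.
    - intros e He.
      set (sg := Rmax 2 (Rmax (ln (2 / T) + 2) (2 * (- ln e) / eta + 1))).
      assert (Hsg2 : 2 <= sg) by apply Rmax_l.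
      assert (HsgT : ln (2 / T) + 2 <= sg) by (eapply Rle_trans; [apply Rmax_l| apply Rmax_r]).
      assert (Hsge : 2 * (- ln e) / eta + 1 <= sg) by (eapply Rle_trans; [apply Rmax_r| apply Rmax_r]).
      set (u := sg ^ 2 - ln 2).
      assert (Hu : sg <= u) by (unfold u; nra).
      exists (2 * exp (- u)).
      assert (Hln : ln (2 / (2 * exp (- u))) = u).
      { replace (2 / (2 * exp (- u))) with (/ exp (- u)) by (field; apply Rgt_not_eq, exp_pos).
        rewrite ln_Rinv by apply exp_pos. rewrite ln_exp. ring. }
      split; [split|].
      + pose proof (exp_pos (- u)); lra.
      + assert (HT2 : 0 < T / 2) by (unfold T; lra).
        rewrite ln_div in HsgT by (unfold T; lra).
        assert (exp (- u) <= exp (ln (T / 2))).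
        { apply exp_le_mono. rewrite ln_div by lra. lra. }
        rewrite exp_ln in H0 by lra. lra.
      + rewrite FP by (pose proof (exp_pos (- u)); lra). rewrite Hln.
        pose proof (psi_big sg Hsg2). fold u in H0.
        rewrite <- (exp_ln e) by auto. apply exp_increasing.
        apply (Rmult_le_compat_l eta) in Hsge; [|lra].
        replace (eta * (2 * - ln e / eta + 1)) with (2 * - ln e + eta) in Hsge by (field; lra).
        nra. }
  exists (1/2), r0, eta, (fun t => F (Rmin t T)).
  split; [lra|]. split; [auto|]. split; [auto|]. split; [exact Hgauge|].
  split.
  { intros t Ht. rewrite Rmin_left by (unfold T; lra). reflexivity. }
  intros a r Ea [Hr Hrr0].
  set (rs := fun n => nat_rect (fun _ => R) r (fun _ x => H (x / 2) / 4) n).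
  assert (rsS : forall n, rs (S n) = H (rs n / 2) / 4) by reflexivity.
  assert (Hinv : forall n, 0 < rs n /\ rs n <= r).
  { induction n; [simpl; lra|].
    destruct IHn as [h1 h2]. rewrite rsS.
    assert (0 < H (rs n / 2)).
    { unfold H, Rpower. pose proof (exp_pos (- beta * ln (ln (1 / (rs n / 2))))).
      apply Rmult_lt_0_compat; auto. apply Rmult_lt_0_compat; lra. }
    pose proof (Hle (rs n / 2) ltac:(lra)). rewrite HH in H1 by lra.
    split; lra. }
  assert (Hdec8 : forall n, rs (S n) <= rs n / 8).
  { intro n. rewrite rsS. destruct (Hinv n).
    pose proof (Hle (rs n / 2) ltac:(lra)). rewrite HH in H2 by lra. lra. }
  set (ts := fun n => 2 * rs (S n)).
  set (x := fun n => - ln (rs n)).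
  assert (HxS : forall n, x (S n) = x n + (kap + beta * ln (x n + ln 2))).
  { intro n. unfold x. rewrite rsS. destruct (Hinv n). unfold H, Rpower, kap.
    assert (Hq : ln (1 / (rs n / 2)) = - ln (rs n) + ln 2).
    { replace (1 / (rs n / 2)) with (2 / rs n) by (field; lra). rewrite ln_2_over by lra. ring. }
    rewrite Hq.
    assert (Hp : 0 < exp (- beta * ln (- ln (rs n) + ln 2))) by apply exp_pos.
    rewrite ln_div; [| apply Rmult_lt_0_compat; [lra| apply Rmult_lt_0_compat; lra] | lra].
    rewrite ln_mult; [| lra | apply Rmult_lt_0_compat; lra].
    rewrite ln_mult; [| lra | lra].
    rewrite ln_exp, ln_div by lra. ring. }
  assert (Hx0 : X <= x 0%nat) by (apply HlnR; simpl; lra).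
  assert (Hxinv : forall n, X <= x n /\ psi (x n) <= psi (x 0%nat) + 2 * beta * INR n).
  { induction n; [simpl; split; [auto| lra]|].
    destruct IHn as [h1 h2].
    assert (Hl1 : Xl <= ln (x n + ln 2)) by (rewrite <- HlnX; apply ln_le; lra).
    assert (Hd : 0 <= kap + beta * ln (x n + ln 2)).
    { pose proof (Rle_abs (- kap)). rewrite Rabs_Ropp in H0. nra. }
    rewrite HxS. split; [lra|].
    pose proof (psi_step (x n) kap beta ltac:(lra) Hb ltac:(lra) ltac:(nra) Hd).
    rewrite S_INR. lra. }
  set (B := exp (- eta * psi (x 0%nat)) / 2).
  assert (HB : forall n, B / 2 ^ n <= F (Rmin (ts n) T)).
  { intro n. destruct (Hinv (S n)) as [h1 h2]. pose proof (Hdec8 n). destruct (Hinv n).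
    rewrite Rmin_left by (unfold ts, T; lra).
    rewrite FP by (unfold ts; lra).
    assert (Hlt : ln (2 / ts n) = x (S n)).
    { unfold ts, x. replace (2 / (2 * rs (S n))) with (/ rs (S n)) by (field; lra).
      rewrite ln_Rinv by lra. ring. }
    rewrite Hlt.
    destruct (Hxinv (S n)) as [_ Hp]. rewrite S_INR in Hp.
    replace (B / 2 ^ n) with (exp (- eta * psi (x 0%nat) - (INR n + 1) * ln 2)).
    - apply exp_le_mono.
      assert (HG : eta * psi (x (S n)) <= eta * (psi (x 0%nat) + 2 * beta * (INR n + 1))).
      { apply Rmult_le_compat_l; lra. }
      replace (eta * (psi (x 0%nat) + 2 * beta * (INR n + 1))) with
        (eta * psi (x 0%nat) + (INR n + 1) * (eta * (2 * beta))) in HG by ring.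
      rewrite Hetab in HG. lra.
    - unfold B. rewrite pow2_exp.
      replace (- eta * psi (x 0%nat) - (INR n + 1) * ln 2) with
        (- eta * psi (x 0%nat) + - (INR n * ln 2) + - ln 2) by ring.
      rewrite !exp_plus, !exp_Ropp, exp_ln by lra. field.
      apply Rgt_not_eq, exp_pos. }
  apply (Rbar_le_trans _ (Finite B)).
  - simpl. rewrite Rmin_left by (unfold T; lra).
    rewrite FP by lra.
    replace (ln (2 / (2 * r))) with (x 0%nat).
    + unfold B. lra.
    + unfold x. simpl. replace (2 / (2 * r)) with (/ r) by (field; lra). rewrite ln_Rinv by lra. ring.
  - change (Rbar_le (Finite B) (hausdorff_content (fun t : R => F (Rmin t T))
                    (fun z => E z /\ cdisc a (rs 0%nat) z))).
    apply content_lb with (ts := ts); auto.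
    + intros t Ht. apply exp_pos.
    + intros s t Hs Hst. apply (proj1 (proj2 Hgauge)); auto.
    + intro n; apply Hinv.
    + intro n; unfold ts; pose proof (proj1 (Hinv (S n))); lra.
    + intro n; pose proof (Hdec8 n); pose proof (proj1 (Hinv n)); lra.
    + intros n b Eb. destruct (Hinv n) as [h1 h2].
      destruct (Hann b Eb (rs n / 2) ltac:(lra)) as [z [Ez [Hz1 Hz2]]].
      rewrite HH in Hz1 by lra.
      exists z. split; auto. unfold ts. rewrite rsS. split; lra.
Qed.

Lemma part2_bwd (E : C -> Prop) (HE : closed E) :
   (exists (A r0 eta : R) (g : R -> R),
      0 < A /\ 0 < r0 /\ 0 < eta /\ gauge g /\
      (forall t, 0 < t < 2 * r0 ->
         g t = exp (- eta * (ln (2 / t) / ln (ln (4 / t))))) /\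
      (forall a r, E a -> 0 < r < r0 ->
         Rbar_le (Finite (A * g (2 * r)))
                 (hausdorff_content g (fun z => E z /\ cdisc a r z)))) ->
  exists beta, 0 < beta /\ condU2 beta E.
Proof.
  intros [A [r0 [eta [g [HA [Hr0 [Heta [Hg [Hform Hlb]]]]]]]]].
  pose proof ln2_pos as Hl2. pose proof ln2_lt1 as Hl21.
  set (beta := 8 * (Rabs (ln A) + 1) / eta).
  assert (Hb : 0 < beta) by (unfold beta; apply Rdiv_lt_0_compat; [pose proof (Rabs_pos (ln A)); lra| lra]).
  assert (Hetab : eta * beta / 8 = Rabs (ln A) + 1) by (unfold beta; field; lra).
  set (Ls := 9 + 4 * beta ^ 2).
  set (R0 := Rmin (Rmin r0 (1/4)) (exp (- Ls))).
  assert (HR0 : 0 < R0) by (unfold R0; apply Rmin_glb_lt; [apply Rmin_glb_lt; lra| apply exp_pos]).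
  assert (HR0r0 : R0 <= r0) by (unfold R0; eapply Rle_trans; [apply Rmin_l| apply Rmin_l]).
  assert (HR014 : R0 <= 1/4) by (unfold R0; eapply Rle_trans; [apply Rmin_l| apply Rmin_r]).
  assert (HR0e : R0 <= exp (- Ls)) by (unfold R0; apply Rmin_r).
  assert (HLs : forall r, 0 < r < R0 -> Ls < - ln r).
  { intros r Hr. assert (ln r < ln (exp (- Ls))) by (apply ln_increasing; lra). rewrite ln_exp in H; lra. }
  assert (HLs9 : 9 <= Ls) by (unfold Ls; nra).
  assert (Hh2 : forall r, 0 < r -> h2 beta r = r * exp (- beta * ln (- ln r))).
  { intros r Hr. unfold h2. destruct Rle_dec; [lra|]. unfold Rpower. do 3 f_equal.
    unfold Rdiv. rewrite Rmult_1_l, ln_Rinv; auto. }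
  assert (Hexp1 : forall r, 0 < r < R0 -> exp (- beta * ln (- ln r)) <= 1).
  { intros r Hr. pose proof (HLs r Hr). rewrite <- exp_0. apply exp_le_mono.
    assert (0 <= ln (- ln r)) by (rewrite <- ln_1; apply ln_le; lra). nra. }
  exists beta. split; auto.
  exists (1/2), R0. split; [lra|]. split; [auto|].
  split; [exact HE|]. split; [|split].
  - intros r s Hr Hrs Hs. destruct (Rle_lt_or_eq_dec 0 r Hr) as [Hr'|Hr'].
    + rewrite !Hh2 by lra. apply Rmult_le_compat_l; [lra|].
      apply Rmult_le_compat; try lra; try (left; apply exp_pos).
      apply exp_le_mono.
      pose proof (HLs s ltac:(lra)).
      assert (ln r <= ln s) by (apply ln_le; lra).
      assert (ln (- ln s) <= ln (- ln r)) by (apply ln_le; lra).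
      nra.
    + subst r. unfold h2 at 1. destruct Rle_dec; [|lra].
      destruct (Rle_lt_or_eq_dec 0 s Hrs) as [Hs'|Hs'].
      * rewrite Hh2 by lra. pose proof (exp_pos (- beta * ln (- ln s))). nra.
      * subst s. unfold h2. destruct Rle_dec; lra.
  - intros r [Hr HrR]. destruct (Rle_lt_or_eq_dec 0 r Hr) as [Hr'|Hr'].
    + rewrite Hh2 by lra. pose proof (Hexp1 r ltac:(lra)). pose proof (exp_pos (- beta * ln (- ln r))). nra.
    + subst r. unfold h2. destruct Rle_dec; lra.
  - intros a Ea r [Hr HrR]. apply NNPP. intro Hno.
    pose proof (HLs r ltac:(lra)) as HL.
    set (L := - ln r) in *.
    set (rho := 1/2 * (r * exp (- beta * ln L))).
    assert (HeL : 0 < exp (- beta * ln L)) by apply exp_pos.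
    assert (HeL1 : exp (- beta * ln L) <= 1) by (apply Hexp1; lra).
    assert (Hrho : 0 < rho) by (unfold rho; nra).
    assert (HF : forall z, E z /\ cdisc a r z -> Cmod (z - a)%C <= rho).
    { intros z [Ez Hz]. unfold cdisc in Hz. destruct (Rle_lt_dec (Cmod (z - a)%C) rho) as [|hl]; auto.
      exfalso. apply Hno. exists z. split; auto. rewrite Hh2 by lra. fold L. fold rho. lra. }
    assert (Hkey : A * g (2 * r) <= g (2 * rho)).
    { apply le_epsilon. intros eps He.
      apply (Rbar_le_fin_trans _ _ _ (Hlb a r Ea ltac:(lra)) (content_ub g Hg _ a rho Hrho HF eps He)). }
    assert (Hg1 : g (2 * r) = exp (- eta * psi L)).
    { rewrite Hform by lra. rewrite formula2 by lra. do 3 f_equal.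
      replace (2 / (2 * r)) with (/ r) by (field; lra). rewrite ln_Rinv by lra. reflexivity. }
    assert (Hg2 : g (2 * rho) = exp (- eta * psi (L + (ln 2 + beta * ln L)))).
    { rewrite Hform by (unfold rho; nra). rewrite formula2 by lra. do 3 f_equal.
      unfold rho. replace (2 / (2 * (1 / 2 * (r * exp (- beta * ln L))))) with (2 * (/ r) * / exp (- beta * ln L)) by (field; lra).
      rewrite !ln_mult, !ln_Rinv, ln_exp; try lra.
      - unfold L. ring.
      - apply Rinv_0_lt_compat; lra.
      - apply Rmult_lt_0_compat; [lra| apply Rinv_0_lt_compat; lra].
      - apply Rinv_0_lt_compat; lra. }
    assert (HbL : beta * ln L <= L) by (apply beta_ln_le; auto; unfold Ls in HL; nra).
    pose proof (psi_jump L beta Hb ltac:(lra) HbL) as Hj.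
    rewrite Hg1, Hg2 in Hkey.
    rewrite <- (exp_ln A) in Hkey at 1 by lra. rewrite <- exp_plus in Hkey.
    apply exp_le_inv' in Hkey.
    assert (eta * (psi L + beta / 8) <= eta * psi (L + (ln 2 + beta * ln L))) by (apply Rmult_le_compat_l; lra).
    replace (eta * (psi L + beta / 8)) with (eta * psi L + eta * beta / 8) in H by field.
    rewrite Hetab in H.
    pose proof (Rle_abs (- ln A)). rewrite Rabs_Ropp in H0.
    lra.
Qed.

Theorem theorem1p4 (E : C -> Prop) (HE : closed E) :
  ((exists alpha, 1 < alpha /\ condU1 alpha E) <->
   (exists (A Cc r0 gamma : R) (g : R -> R),
      0 < A /\ 0 < Cc /\ 0 < r0 /\ 0 < gamma /\ gauge g /\
      (forall t, 0 < t < 2 * r0 -> g t = Rpower (ln (1 / (Cc * t))) (- gamma)) /\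
      (forall a r, E a -> 0 < r < r0 ->
         Rbar_le (Finite (A * g (2 * r)))
                 (hausdorff_content g (fun z => E z /\ cdisc a r z)))))
  /\
  ((exists beta, 0 < beta /\ condU2 beta E) <->
   (exists (A r0 eta : R) (g : R -> R),
      0 < A /\ 0 < r0 /\ 0 < eta /\ gauge g /\
      (forall t, 0 < t < 2 * r0 ->
         g t = exp (- eta * (ln (2 / t) / ln (ln (4 / t))))) /\
      (forall a r, E a -> 0 < r < r0 ->
         Rbar_le (Finite (A * g (2 * r)))
                 (hausdorff_content g (fun z => E z /\ cdisc a r z))))).
Proof.
  split; split.
  - apply part1_fwd; auto.
  - apply part1_bwd; auto.
  - apply part2_fwd; auto.
  - apply part2_bwd; auto.
Qed.
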